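(* Let $V\subset\mathbb{R}^d$ be a finite antichain and $p\in S_V$. If $p$ is a syzygy-point, then $p$ is a characteristic point.
   Context: For $x,y\in\mathbb{R}^d$, $x\le y$ (dominance order) means $x_i\le y_i$ for all $i$; $y\rhd x$ means $y_i>x_i$ for all $i$; $y\rhd_i x$ means $y_i=x_i$ and $y_j>x_j$ for all $j\neq i$. $V\subset\mathbb{R}^d$ is a finite antichain in the dominance order. The orthogonal surface $S_V$ is the topological boundary of $\langle V\rangle=\{x: x\ge v\text{ for some }v\in V\}$. Flats: $U_i(v)=\{p\in S_V: p\rhd_i v\}$; for $v,w\in V$ put $v\sim_i w$ iff $U_i(v)\cap U_i(w)\neq\emptyset$, and let $\sim_i^c$ be the reflexive–transitive closure; the $i$-flat of $v$ is $F_i(v)=\overline{\bigcup_{w\sim_i^c v}U_i(w)}$, and an $i$-flat is any set of this form. A characteristic point is a point of $S_V$ that lies in some $i$-flat for every $i\in\{1,\dots,d\}$. For $p\in S_V$ let $\Delta_p$ be the simplicial complex on $\{1,\dots,d\}$ with $I\in\Delta_p$ iff $p+\epsilon\sum_{i\in I}e_i\in S_V$ for some $\epsilon>0$ ($e_i$ the standard unit vectors). $p$ is a syzygy-point if $\Delta_p$ has non-trivial (reduced) homology. *)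

(* Defs.v *)
From HB Require Import structures.
From mathcomp Require Import all_boot all_order all_algebra.
From mathcomp Require Import all_classical all_reals topology normedtype matrix_topology.
From Stdlib Require Import Relations.
Import numFieldNormedType.Exports.
Set Implicit Arguments. Unset Strict Implicit. Unset Printing Implicit Defensive.
Import Order.TTheory GRing.Theory Num.Theory.
Local Open Scope classical_set_scope.
Local Open Scope ring_scope.

Section OrthSurf.
Variables (R : realType) (d : nat).
Notation pt := 'rV[R]_d.

Definition dom_le (x y : pt) : Prop := forall i : 'I_d, x ord0 i <= y ord0 i.
Definition dom_gt (y x : pt) : Prop := forall i : 'I_d, x ord0 i < y ord0 i.
Definition dom_gt_i (i : 'I_d) (y x : pt) : Prop :=
  y ord0 i = x ord0 i /\ forall j : 'I_d, j != i -> x ord0 j < y ord0 j.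

Definition antichain (V : seq pt) : Prop :=
  forall v w, v \in V -> w \in V -> dom_le v w -> v = w.

Definition upset (V : seq pt) : set pt := [set x | exists2 v, v \in V & dom_le v x].

Definition surface (V : seq pt) : set pt :=
  topology_structure.closure (upset V) `\` interior (upset V).

Definition Uflat (V : seq pt) (i : 'I_d) (v : pt) : set pt :=
  [set p | surface V p /\ dom_gt_i i p v].

Definition sim_i (V : seq pt) (i : 'I_d) (v w : pt) : Prop :=
  v \in V /\ w \in V /\ exists p, Uflat V i v p /\ Uflat V i w p.

Definition simc_i (V : seq pt) (i : 'I_d) : relation pt :=
  clos_refl_trans pt (sim_i V i).

Definition flat (V : seq pt) (i : 'I_d) (v : pt) : set pt :=
  topology_structure.closure [set p | exists w, simc_i V i w v /\ Uflat V i w p].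

Definition is_flat (V : seq pt) (i : 'I_d) (Fl : set pt) : Prop :=
  exists2 v, v \in V & Fl = flat V i v.

Definition characteristic (V : seq pt) (p : pt) : Prop :=
  surface V p /\ forall i : 'I_d, exists Fl, is_flat V i Fl /\ Fl p.

Definition ind_vec (I : {set 'I_d}) : pt := \row_(i < d) (if i \in I then 1 else 0).

Definition Delta (V : seq pt) (p : pt) : set {set 'I_d} :=
  [set I | exists eps : R, 0 < eps /\ surface V (p + eps *: ind_vec I)].

End OrthSurf.

(* Reduced simplicial homology with coefficients in a field F of a family of
   faces Delta on the vertex set 'I_d, via the augmented chain complex.
   Chains of degree k (k = number of vertices of a face, k = 0 is the empty
   face, i.e. homological degree k-1) have basis the faces of Delta of size k. *)
Section Homology.
Variables (F : fieldType) (d : nat).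
Notation N := #|{: {set 'I_d}}|.

Definition face_of (a : 'I_N) : {set 'I_d} := enum_val a.

(* boundary map from size-k chains to size-(k-1) chains, as an N x N matrix
   (rows: source faces, columns: target faces; row-vector convention) *)
Definition bdry (Dl : set {set 'I_d}) (k : nat) : 'M[F]_N :=
  \matrix_(a, b)
    (if `[< Dl (face_of a) /\ Dl (face_of b) >] && (#|face_of a| == k)
     then \sum_(j in face_of a | face_of b == face_of a :\ j)
            (-1) ^+ #|[set i in face_of a | (i < j)%N]|
     else 0).

Definition nfaces (Dl : set {set 'I_d}) (k : nat) : nat :=
  #|[set s : {set 'I_d} | `[< Dl s >] && (#|s| == k)]|.

(* dim H~_{k-1} = nfaces k - rank bdry_k - rank bdry_{k+1} *)
Definition reduced_homology_nontrivial (Dl : set {set 'I_d}) : Prop :=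
  exists k : nat, (\rank (bdry Dl k) + \rank (bdry Dl k.+1) < nfaces Dl k)%N.

End Homology.

Definition syzygy_point (F : fieldType) (R : realType) (d : nat)
  (V : seq 'rV[R]_d) (p : 'rV[R]_d) : Prop :=
  reduced_homology_nontrivial F (Delta V p).

(* Main.v *)
Require Import Defs.
From mathcomp Require Import all_boot all_order all_algebra.
From mathcomp Require Import all_classical all_reals topology normedtype matrix_topology.
From mathcomp Require Import ring lra.
From Stdlib Require Import Relations.
Import numFieldNormedType.Exports.
Set Implicit Arguments. Unset Strict Implicit. Unset Printing Implicit Defensive.
Import Order.TTheory GRing.Theory Num.Theory.
Local Open Scope classical_set_scope.
Local Open Scope ring_scope.

Section Hom.
Variables (F : fieldType) (d : nat).
Notation N := #|{: {set 'I_d}}|.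

Lemma sum_faces (G : {set 'I_d} -> F) :
  \sum_(c < N) G (face_of c) = \sum_C G C.
Proof.
rewrite (reindex (@enum_rank {set 'I_d})) /=; last first.
  by exists (fun c => face_of c) => x _; rewrite /face_of ?enum_valK ?enum_rankK.
by apply: eq_bigr => C _; rewrite /face_of enum_rankK.
Qed.

Lemma card_ltU1 (x y : 'I_d) (B : {set 'I_d}) : x \notin B ->
  #|[set l in x |: B | (l < y)%N]| = (#|[set l in B | (l < y)%N]| + (x < y))%N.
Proof.
move=> xB; case: ltnP => xy.
  have -> : [set l in x |: B | (l < y)%N] = x |: [set l in B | (l < y)%N].
    by apply/setP => l; rewrite !inE; case: eqP => [->|]; rewrite ?xy ?orbT ?orbF.
  by rewrite cardsU1 inE (negPf xB) /= addnC.
rewrite addn0; apply: eq_card => l; rewrite !inE; case: eqP => [->|] //=.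
by rewrite ltnNge xy (negPf xB).
Qed.

Lemma sign_sq (n : nat) : (-1) ^+ n * (-1) ^+ n = 1 :> F.
Proof. by rewrite -exprD -signr_odd addnn odd_double. Qed.

Variables (Dl : set {set 'I_d}) (i : 'I_d).
Hypothesis down : forall A B : {set 'I_d}, B \subset A -> Dl A -> Dl B.
Hypothesis cone : forall A, Dl A -> Dl (i |: A).

Definition sgn (A : {set 'I_d}) (j : 'I_d) : F := (-1) ^+ #|[set l in A | (l < j)%N]|.

Definition bd k (A B : {set 'I_d}) : F :=
  if `[< Dl A /\ Dl B >] && (#|A| == k)
  then \sum_(j in A | B == A :\ j) sgn A j else 0.

Lemma bdryE k a b : bdry F Dl k a b = bd k (face_of a) (face_of b).
Proof. by rewrite mxE. Qed.

Lemma bd_simpl k A B : Dl A ->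
  bd k A B = if #|A| == k then \sum_(j in A | B == A :\ j) sgn A j else 0.
Proof.
move=> DA; rewrite /bd; case: (#|A| == k); rewrite ?andbF ?andbT //.
case: (pselect (Dl B)) => DB.
  by rewrite asboolT.
rewrite asboolF; last by case.
rewrite big1 // => j /andP[jA /eqP BA]; exfalso; apply: DB.
by apply: (down _ DA); rewrite BA subsetDl.
Qed.

Definition hm (A C : {set 'I_d}) : F :=
  if `[< Dl A >] && (i \notin A) && (C == i |: A) then sgn A i else 0.

Definition Pf k (A B : {set 'I_d}) : F :=
  if `[< Dl A >] && (#|A| == k) && (A == B) then 1 else 0.

Lemma key k A B :
  \sum_C hm A C * bd k.+1 C B + \sum_C bd k A C * hm C B = Pf k A B.
Proof.
rewrite /Pf; case: (pselect (Dl A)) => DA; last first.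
  rewrite (asboolF DA) /= !big1 ?addr0 // => C _.
    by rewrite /bd asboolF /= ?mul0r //; case.
  by rewrite /hm (asboolF DA) /= mul0r.
rewrite asboolT //=.
have S2 : \sum_C bd k A C * hm C B =
   if #|A| == k then \sum_(j in A) sgn A j * hm (A :\ j) B else 0.
  under eq_bigr do rewrite bd_simpl //.
  case: (#|A| == k); last by rewrite big1 // => C _; rewrite mul0r.
  under eq_bigr do rewrite big_distrl /= big_mkcondr /=.
  rewrite exchange_big /=; apply: eq_bigr => j jA.
  rewrite -big_mkcond /= big_pred1_eq //.
have hmE j : j \in A -> hm (A :\ j) B =
    if (i \notin A :\ j) && (B == i |: (A :\ j)) then sgn (A :\ j) i else 0.
  move=> jA; rewrite /hm asboolT //=; apply: (down _ DA); exact: subsetDl.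
rewrite S2; case: (boolP (i \in A)) => iA.
  rewrite big1 ?add0r; last by move=> C _; rewrite /hm asboolT //= iA /= mul0r.
  case: (#|A| == k) => //=.
  rewrite (bigD1 i) //= big1 ?addr0; last first.
    move=> j /andP[jA ji]; rewrite hmE // !inE eq_sym ji iA /= mulr0 //.
  rewrite hmE // !inE eqxx /= finset.setD1K //.
  have -> : sgn (A :\ i) i = sgn A i.
    rewrite /sgn; congr (_ ^+ _); apply: eq_card => l; rewrite !inE.
    by case: eqP => [->|]; rewrite ?ltnn ?andbF.
  by rewrite eq_sym; case: eqP => _; rewrite ?sign_sq ?mulr0.
rewrite (bigD1 (i |: A)) /=; last by [].
rewrite big1 ?addr0; last first.
  by move=> C CiA; rewrite /hm asboolT //= iA /= (negPf CiA) mul0r.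
rewrite /hm asboolT //= iA eqxx /=.
rewrite bd_simpl; last exact: cone.
rewrite cardsU1 iA /= add1n eqSS.
case: (#|A| == k); last by rewrite mulr0 addr0.
rewrite big_mkcondr (bigD1 i) /= ?finset.setU11 //.
have -> : (i |: A) :\ i = A by rewrite finset.setU1K.
have -> : sgn (i |: A) i = sgn A i.
  by rewrite /sgn card_ltU1 // ltnn addn0.
have -> : \sum_(j in i |: A | j != i)
     (if B == (i |: A) :\ j then sgn (i |: A) j else 0)
   = \sum_(j in A) (if B == i |: (A :\ j) then sgn (i |: A) j else 0).
  rewrite (eq_bigl (fun j => j \in A)); last first.
    move=> j; rewrite !inE; case: (eqVneq j i) => [->|ji] /=.
      by rewrite (negPf iA).
    by rewrite andbT.
  apply: eq_bigr => j jA; congr (if B == _ then _ else _).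
  apply/setP => l; rewrite !inE; case: (eqVneq l i) => [->|li] //=.
  by case: (eqVneq i j) => [ij|//]; rewrite ij jA in iA.
rewrite mulrDr -addrA (eq_sym B A) mulr_sumr -big_split /= big1 ?addr0; last first.
  move=> j jA; rewrite asboolT; last by apply: (down _ DA); exact: subsetDl.
  rewrite !inE (negPf iA) andbF /=.
  have ji : j != i by apply: contraNneq iA => <-.
  case: (B == _); rewrite ?mulr0 ?addr0 //.
  rewrite /sgn card_ltU1 //.
  have AE : A = j |: (A :\ j) by rewrite finset.setD1K.
  have E1 : #|[set l in A | (l < i)%N]| =
            (#|[set l in A :\ j | (l < i)%N]| + (j < i))%N.
    by rewrite {1}AE card_ltU1 ?finset.setD11.
  rewrite E1 !exprD.
  set x := (-1) ^+ #|[set l in A :\ j | (l < i)%N]|.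
  set y := (-1) ^+ #|[set l in A | (l < j)%N]|.
  case: (ltngtP i j) => [lij|lji|eij]; last by move: ji; rewrite (val_inj eij) eqxx.
    rewrite expr0 expr1; ring.
  rewrite expr0 expr1; ring.
by case: (A == B); rewrite ?mulr0 // sign_sq.
Qed.


Definition Hm : 'M[F]_N := \matrix_(a, c) hm (face_of a) (face_of c).
Definition Pm k : 'M[F]_N := \matrix_(a, b) Pf k (face_of a) (face_of b).

Lemma homotopy k : Hm *m bdry F Dl k.+1 + bdry F Dl k *m Hm = Pm k.
Proof.
apply/matrixP => a b; rewrite !mxE -key.
congr (_ + _).
  rewrite -(sum_faces (fun C => hm (face_of a) C * bd k.+1 C (face_of b))).
  by apply: eq_bigr => c _; rewrite !mxE.
rewrite -(sum_faces (fun C => bd k (face_of a) C * hm C (face_of b))).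
by apply: eq_bigr => c _; rewrite !mxE.
Qed.

Lemma sum_pickl (G : {set 'I_d} -> F) s : \sum_A (A == s)%:R * G A = G s.
Proof.
rewrite (bigD1 s) //= eqxx mul1r big1 ?addr0 // => A /negPf ->; by rewrite mul0r.
Qed.

Lemma sum_pickr (G : {set 'I_d} -> F) s : \sum_A G A * (A == s)%:R = G s.
Proof.
rewrite (bigD1 s) //= eqxx mulr1 big1 ?addr0 // => A /negPf ->; by rewrite mulr0.
Qed.

Lemma nfaces_le k : (nfaces Dl k <= \rank (Pm k))%N.
Proof.
set S := [set s : {set 'I_d} | `[< Dl s >] && (#|s| == k)].
pose X : 'M[F]_(#|S|, N) := \matrix_(r, a) ((face_of a == enum_val r)%:R).
pose Y : 'M[F]_(N, #|S|) := \matrix_(b, c) ((face_of b == enum_val c)%:R).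
have E : X *m Pm k *m Y = 1%:M.
  apply/matrixP => r c; rewrite !mxE.
  rewrite (eq_bigr (fun b => (\sum_A (A == enum_val r)%:R * Pf k A (face_of b)) * (face_of b == enum_val c)%:R)); last first.
    move=> b _; rewrite !mxE; congr (_ * _).
    rewrite (eq_bigr (fun a => (face_of a == enum_val r)%:R * Pf k (face_of a) (face_of b))); last first.
      by move=> a _; rewrite !mxE.
    by rewrite (sum_faces (fun A => (A == enum_val r)%:R * Pf k A (face_of b))).
  rewrite (sum_faces (fun B => (\sum_A (A == enum_val r)%:R * Pf k A B) * (B == enum_val c)%:R)).
  under eq_bigr do rewrite sum_pickl.
  rewrite sum_pickr /Pf.
  have := enum_valP r; rewrite inE => ->.
  by rewrite (inj_eq (@enum_val_inj _ _)) /=; case: (r == c).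
rewrite /nfaces -/S -(mxrank1 F #|S|) -E.
apply: leq_trans (mxrankM_maxl _ _) _; exact: mxrankM_maxr.
Qed.

Lemma acyclic : ~ reduced_homology_nontrivial F Dl.
Proof.
move=> [k]; apply/negP; rewrite -leqNgt addnC.
apply: leq_trans (nfaces_le k) _; rewrite -homotopy.
apply: leq_trans (mxrank_add _ _) _; apply: leq_add.
  exact: mxrankM_maxr.
exact: mxrankM_maxl.
Qed.

End Hom.

Section Geo.
Variables (R : realType) (d : nat).
Notation pt := 'rV[R]_d.

Lemma exists_small (s : seq R) (e0 : R) : 0 < e0 ->
  exists e, [/\ 0 < e, e <= e0 & forall x, x \in s -> 0 < x -> e <= x].
Proof.
elim: s => [|a s IH] e0p; first by exists e0; split.
have [e [e0' ee0 H]] := IH e0p.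
case: (ltrP 0 a) => a0.
  exists (Num.min e a); split.
  - by rewrite lt_min e0' a0.
  - by rewrite ge_min ee0.
  - move=> x; rewrite inE => /orP[/eqP ->|xs] x0; first by rewrite ge_min lexx orbT.
    by rewrite ge_min (H x xs x0).
exists e; split => // x; rewrite inE => /orP[/eqP ->|xs] x0.
  by move: (lt_le_trans x0 a0); rewrite ltxx.
exact: H.
Qed.

Lemma ball_coord (x y : pt) e : ball x e y -> forall j, `|x ord0 j - y ord0 j| < e.
Proof. by move=> [e0 H] j; exact: (H ord0 j). Qed.

Lemma coord_ball (x y : pt) e : 0 < e -> (forall j, `|x ord0 j - y ord0 j| < e) -> ball x e y.
Proof. by move=> e0 H; split => // i j; rewrite (ord1 i); exact: H. Qed.

Lemma absB_lt (a b e : R) : `|a - b| < e -> b < a + e /\ a - e < b.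
Proof. by rewrite ltr_norml => /andP[h1 h2]; split; lra. Qed.

Variable V : seq pt.

Lemma closure_upset x : closure (upset V) x -> upset V x.
Proof.
move=> cx; apply: contrapT => nx.
have nv : forall v, v \in V -> exists j, x ord0 j < v ord0 j.
  move=> v vV; apply: contrapT => h; apply: nx; exists v => // j.
  by rewrite leNgt; apply/negP => hj; apply: h; exists j.
have [e [e0 _ He]] := exists_small [seq v ord0 j - x ord0 j | v : pt <- V, j : 'I_d <- enum 'I_d] ltr01.
have [y [[v vV vy] bxy]] := cx _ (nbhsx_ballx x e e0).
have [j xj] := nv v vV.
have ej : e <= v ord0 j - x ord0 j.
  apply: He; last by rewrite subr_gt0.
  by apply: (allpairs_f (fun (v : pt) (j : 'I_d) => v ord0 j - x ord0 j)); rewrite ?mem_enum.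
have [h1 _] := absB_lt (ball_coord bxy j).
have := vy j; lra.
Qed.

Lemma interior_upset x : interior (upset V) x -> exists2 v, v \in V & dom_gt x v.
Proof.
move=> /nbhs_ballP [e /= e0 He].
have hy : upset V (x - (e / 2) *: const_mx 1).
  apply: He; apply: coord_ball => // j; rewrite !mxE mulr1 opprB addrC subrK.
  by rewrite ger0_norm; lra.
case: hy => v vV vy; exists v => // j.
have := vy j; rewrite !mxE mulr1; lra.
Qed.

Lemma upset_interior x v : v \in V -> dom_gt x v -> interior (upset V) x.
Proof.
move=> vV vx.
have [e [e0 _ He]] := exists_small [seq x ord0 j - v ord0 j | j : 'I_d <- enum 'I_d] ltr01.
apply/nbhs_ballP; exists e => //= y bxy; exists v => // j.
have ej : e <= x ord0 j - v ord0 j.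
  apply: He; last by rewrite subr_gt0.
  by apply: (map_f (fun (j : 'I_d) => x ord0 j - v ord0 j)); rewrite ?mem_enum.
have [_ h2] := absB_lt (ball_coord bxy j); lra.
Qed.

Lemma surfaceP x : surface V x <->
  (exists2 v, v \in V & dom_le v x) /\
  (forall v, v \in V -> exists j, x ord0 j <= v ord0 j).
Proof.
split.
  move=> [cx nix]; split; first exact: closure_upset.
  move=> v vV; apply: contrapT => h; apply: nix; apply: (upset_interior vV) => j.
  by rewrite ltNge; apply/negP => hj; apply: h; exists j.
move=> [ux nx]; split; first exact: subset_closure.
move=> /interior_upset [v vV vx]; have [j xj] := nx v vV.
by have := vx j; rewrite ltNge xj.
Qed.

End Geo.

Section Geo2.
Variables (R : realType) (d : nat) (V : seq 'rV[R]_d) (p : 'rV[R]_d).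
Notation pt := 'rV[R]_d.
Hypothesis hp : surface V p.

Lemma coordE (eps : R) (J : {set 'I_d}) j :
  (p + eps *: ind_vec R J) ord0 j = p ord0 j + (if j \in J then eps else 0).
Proof. by rewrite !mxE; case: ifP; rewrite ?mulr1 ?mulr0. Qed.

Definition good (J : {set 'I_d}) := exists eps : R, 0 < eps /\
  forall v, v \in V -> exists j, p ord0 j + (if j \in J then eps else 0) <= v ord0 j.

Lemma DeltaP J : Delta V p J <-> good J.
Proof.
split.
  move=> [eps [e0 /surfaceP [_ H]]]; exists eps; split => // v vV.
  by have [j hj] := H v vV; exists j; rewrite -coordE.
move=> [eps [e0 H]]; exists eps; split => //; apply/surfaceP; split.
  have [[v vV vp] _] := (surfaceP V p).1 hp.
  exists v => // j; rewrite coordE; have := vp j; case: ifP => _; lra.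
by move=> v vV; have [j hj] := H v vV; exists j; rewrite coordE.
Qed.

Lemma good_down (I J : {set 'I_d}) : good I -> J \subset I -> good J.
Proof.
move=> [eps [e0 H]] JI; exists eps; split => // v vV.
have [j hj] := H v vV; exists j; apply: le_trans hj.
rewrite lerD2l; case: ifP => jJ; first by rewrite (fintype.subsetP JI j jJ).
by case: ifP => _; lra.
Qed.

Lemma closure_U i w : w \in V -> dom_le w p -> w ord0 i = p ord0 i ->
  good [set j | (j != i) && (p ord0 j <= w ord0 j)]%SET ->
  closure (Uflat V i w) p.
Proof.
pose J : {set 'I_d} := [set j | (j != i) && (p ord0 j <= w ord0 j)]%SET.
move=> wV wp wi [eps [e0 H]] B /nbhs_ballP [e /= ep HB].
set t := Num.min (e / 2) eps.
have t0 : 0 < t by rewrite lt_min e0; apply/andP; split => //; lra.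
have te : t < e by rewrite /t gt_min; apply/orP; left; lra.
have teps : t <= eps by rewrite /t ge_min lexx orbT.
exists (p + t *: ind_vec R J); split; last first.
  apply: HB; apply: coord_ball => // j; rewrite coordE opprD addrA subrr sub0r normrN.
  by case: ifP => _; rewrite ?normr0 // ger0_norm; lra.
split.
  apply/surfaceP; split.
    exists w => // j; rewrite coordE; have := wp j; case: ifP => _; lra.
  move=> v vV; have [j hj] := H v vV; exists j; rewrite coordE; apply: le_trans hj.
  by case: ifP => _; lra.
split.
  rewrite coordE inE eqxx /= wi; lra.
move=> j ji; rewrite coordE inE ji /=.
case: (lerP (p ord0 j) (w ord0 j)) => pw /=; first by have := wp j; lra.
lra.
Qed.

Lemma cone_good i : (forall w, w \in V -> ~ closure (Uflat V i w) p) ->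
  forall I, good I -> good (i |: I).
Proof.
move=> nw I [eps0 [e00 H0]].
have [eps [e0 ee0 He]] := exists_small
  [seq v ord0 j - p ord0 j | v : pt <- V, j : 'I_d <- enum 'I_d] e00.
exists eps; split => // v vV.
case: (pselect (exists j, (j \notin i |: I) && (p ord0 j <= v ord0 j))).
  move=> [j /andP[jn pj]]; exists j; by rewrite (negPf jn) addr0.
move=> nA.
case: (pselect (exists j, p ord0 j < v ord0 j)).
  move=> [j pj]; exists j.
  have ej : eps <= v ord0 j - p ord0 j.
    apply: He; last by rewrite subr_gt0.
    by apply: (allpairs_f (fun (v : pt) (j : 'I_d) => v ord0 j - p ord0 j)); rewrite ?mem_enum.
  by case: ifP => _; lra.
move=> nB; exfalso.
have vp : dom_le v p.
  by move=> j; rewrite leNgt; apply/negP => h; apply: nB; exists j.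
have vlt : forall j, j \notin i |: I -> v ord0 j < p ord0 j.
  move=> j jn; rewrite ltNge; apply/negP => h; apply: nA; exists j; by rewrite jn h.
have [j0 hj0] := H0 v vV.
have j0I : j0 \notin I.
  by apply/negP => h; move: hj0; rewrite h; have := vp j0; lra.
have j0i : j0 = i.
  apply/eqP; apply: contraT => h.
  have : j0 \notin i |: I by rewrite !inE negb_or h j0I.
  move/vlt; move: hj0; rewrite (negPf j0I); lra.
apply: (nw v vV); apply: closure_U => //.
  rewrite -j0i; move: hj0; rewrite (negPf j0I) addr0 => h.
  by apply/eqP; rewrite eq_le h vp.
apply: (good_down (I := I)); first by exists eps0; split.
apply/fintype.subsetP => j; rewrite inE => /andP[ji pj].
apply: contraT => jI.
have : j \notin i |: I by rewrite !inE negb_or ji jI.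
move/vlt; lra.
Qed.

End Geo2.

Theorem lemma4p10 (R : realType) (d : nat) (V : seq 'rV[R]_d) (p : 'rV[R]_d) :
  antichain V -> surface V p ->
  (exists F : fieldType, syzygy_point F V p) ->
  characteristic V p.
Proof.
move=> _ hp [Fd hsyz]; split => // i.
case: (pselect (exists2 w, w \in V & closure (Uflat V i w) p)) => [[w wV cw]|nw].
  exists (flat V i w); split; first by exists w.
  apply: closureS cw => q Uq; exists w; split => //; exact: rt_refl.
exfalso; apply: (@acyclic Fd d (Delta V p) i _ _ hsyz).
- move=> A B BA /(DeltaP hp) gA; apply/(DeltaP hp); exact: good_down gA BA.
- move=> A /(DeltaP hp) gA; apply/(DeltaP hp); apply: cone_good => // w wV cw.
  by apply: nw; exists w.
Qed.
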